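(* Let $X_1,\dots,X_n$ be Polish spaces with Borel probability measures $\mu_i$, let $\mu=\prod_{i=1}^n\mu_i$ on $X=\prod_iX_i$, and let $c:X\to\mathbb{R}$ be Borel measurable with $c\in L^1(X,\mu)$. For $y\in X$ and $\alpha\subseteq\{1,\dots,n\}$ let $c_\alpha(x_\alpha)=c(x_\alpha y_{\{1,\dots,n\}\setminus\alpha})$ on $X_\alpha$. Then there exists $y\in X$ such that for every $\alpha\subseteq\{1,\dots,n\}$ the function $c_\alpha$ is integrable with respect to $\mu_\alpha=\prod_{i\in\alpha}\mu_i$ and $\|c_\alpha\|_{L^1(\mu_\alpha)}\le 2^{n+1}\|c\|_{L^1(\mu)}$ (for $\alpha=\varnothing$ this means $|c(y)|\le2^{n+1}\|c\|_{L^1(\mu)}$).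
   Context: $X_\alpha=\prod_{i\in\alpha}X_i$; for disjoint $\alpha,\beta$, $x_\alpha y_\beta$ denotes the point of $X_{\alpha\sqcup\beta}$ whose coordinates are taken from $x_\alpha$ and $y_\beta$. *)

(* Defs.v *)
From HB Require Import structures.
From mathcomp Require Import all_boot all_order all_algebra.
From mathcomp Require Import all_classical all_reals all_analysis.
Set Implicit Arguments. Unset Strict Implicit. Unset Printing Implicit Defensive.
Import Order.TTheory GRing.Theory Num.Theory.
(* Product topology on dependent function types (as in ArrowAsProduct),
   declared here for pointed factors so that the product is a ptopologicalType. *)
HB.instance Definition _ (U : Type) (T : U -> ptopologicalType) :=
  Topological.copy (forall x : U, T x) (prod_topology T).
Local Open Scope classical_set_scope.
Local Open Scope ring_scope.

(* A Polish space, presented (as usual) together with a compatible complete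
   metric: a complete (pseudo)metric space which is Hausdorff (so the
   pseudometric is a metric) and separable. *)
Definition polish_space (R : realType) (T : completePseudoMetricType R) : Prop :=
  hausdorff_space T /\ exists S : set T, countable S /\ dense S.

Definition borel (T : ptopologicalType) := g_sigma_algebraType (@open T).

(* nu is (the) product measure of the family mu on the Borel sets of the
   product space forall i, X i: it gives measure prod_i mu_i(A_i) to every
   Borel rectangle. (For finitely many Polish factors, Borel(prod) is the
   product sigma-algebra, so such a measure exists and is unique.) *)
Definition is_product_measure (R : realType) (I : finType)
  (X : I -> ptopologicalType)
  (nu : set (borel (forall i, X i)) -> \bar R)
  (mu : forall i, set (borel (X i)) -> \bar R) : Prop :=
  forall A : forall i, set (borel (X i)),
    (forall i, measurable (A i)) ->
    nu [set x | forall i, A i (x i)] = (\prod_(i : I) mu i (A i))%E.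

(* x_alpha y_{complement of alpha}: the point of prod_i X i whose coordinates
   in alpha come from x and the others from y. *)
Definition glue_pt (n : nat) (X : 'I_n -> Type) (alpha : {set 'I_n})
  (x : forall i : {i : 'I_n | i \in alpha}, X (sval i)) (y : forall i, X i)
  : forall i, X i :=
  fun i => (if i \in alpha as b return (i \in alpha = b -> X i)
            then fun h => x (exist _ i h) else fun _ => y i) erefl.

(* Main.v *)
Require Import Defs.
From HB Require Import structures.
From mathcomp Require Import all_boot all_order all_algebra.
From mathcomp Require Import all_classical all_reals all_analysis.
From mathcomp Require Import lra measurable_realfun.
Import Order.TTheory GRing.Theory Num.Theory.
Local Open Scope classical_set_scope.
Local Open Scope ring_scope.
Set Implicit Arguments. Unset Strict Implicit. Unset Printing Implicit Defensive.

Section Prod.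
Variables (R : realType) (I : finType) (Y : I -> completePseudoMetricType R).
Local Notation P := (forall i, Y i).
Definition rect (A : forall i, set (Y i)) : set P := [set x | forall i, A i (x i)].

Lemma nbhs_rect (x : P) (O : set P) : nbhs x O ->
  exists U : forall i, set (Y i), (forall i, nbhs (x i) (U i)) /\ rect U `<=` O.
Proof.
pose F := filter_from [set U : forall i, set (Y i) | forall i, nbhs (x i) (U i)] rect.
have FF : Filter F.
  apply: filter_from_filter.
    by exists (fun i => setT) => i; exact: filterT.
  move=> U V HU HV; exists (fun i => U i `&` V i).
    by move=> i; apply: filterI.
  by move=> y /= h; split => i; case: (h i).
have : F --> (x : product_topology_def Y).
  apply/cvg_sup => i A /=.
  rewrite (@nbhsE (initial_topology (fun f : P => f i))) => -[B [oB Bx] BA].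
  case: oB => C oC CB.
  exists (fun j => (fun y => dfwith x j y i) @^-1` C).
    move=> j; apply: open_nbhs_nbhs; split.
      apply: open_comp => //.
      move=> y _. apply: (@continuous_comp _ P _ (dfwith x j) (fun f : P => f i)); first exact: dfwith_continuous.
      exact: proj_continuous.
    rewrite /= (_ : dfwith x j (x j) = x) ; first by rewrite -CB in Bx.
    by apply: functional_extensionality_dep => k; case: dfwithP.
  move=> f /= /(_ i) /=; rewrite dfwithin => Cf; apply: BA; rewrite -CB; exact: Cf.
move=> hF nO.
have [U HU HO] := hF O nO.
by exists U.
Qed.

Lemma cont_meas (T U : ptopologicalType) (f : T -> U) :
  continuous f -> measurable_fun (setT : set (borel T)) (f : borel T -> borel U).
Proof.
move=> cf; apply: (@measurability _ _ (borel T) (borel U) setT f (@open U)) => //.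
move=> _ [B oB <-]; apply: sub_sigma_algebra; rewrite setTI.
exact: open_comp (fun x _ => cf x) oB.
Qed.

Lemma rect_meas (A : forall i, set (Y i)) :
  (forall i, measurable (A i : set (borel (Y i)))) ->
  measurable (rect A : set (borel P)).
Proof.
move=> mA; have -> : rect A = \bigcap_(i in setT) ((fun f : P => f i) @^-1` A i).
  apply/seteqP; split => x /= h i. by move=> _; exact: h. exact: h.
apply: fin_bigcap_measurable; first exact: finite_finset.
move=> i _; rewrite -[X in measurable X]setTI.
exact: (cont_meas (@proj_continuous _ _ i) measurableT (mA i)).
Qed.

Hypothesis sepY : forall i, exists S : set (Y i), countable S /\ dense S.

Lemma enumY i : exists e : nat -> Y i,
  forall (x : Y i) (r : R), 0 < r -> exists m, ball x r (e m).
Proof.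
have [S [cS dS]] := sepY i.
have /pcard_surjP [g gS] := cS.
exists g => x r r0.
have [z [zi Sz]] : ((ball x r)° `&` S) !=set0.
  apply: dS; last exact: open_interior.
  by exists x; apply: nbhs_singleton; apply: nbhs_interior; exact: nbhsx_ballx.
have [m _ gm] := gS z Sz.
by exists m; rewrite gm; apply: interior_subset.
Qed.

Definition E i : nat -> Y i := sval (cid (enumY i)).
Lemma EP i (x : Y i) (r : R) : 0 < r -> exists m, ball x r (E i m).
Proof. exact: (svalP (cid (enumY i))). Qed.

Definition box (u : {ffun I -> nat * nat}) : set P :=
  rect (fun i => (ball (E i (u i).1) ((u i).2.+1%:R^-1))°).

Lemma open_union (O : set P) : open O ->
  O = \bigcup_(u : {ffun I -> nat * nat})
        (if pselect (box u `<=` O) then box u else set0).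
Proof.
move=> oO; apply/seteqP; split; last first.
  by move=> x [u _]; case: pselect => // h /h.
move=> x Ox.
have [U [nU UO]] := nbhs_rect (open_nbhs_nbhs (conj oO Ox)).
have : forall i, exists p : nat * nat,
    (ball (E i p.1) (p.2.+1%:R^-1))° (x i) /\ (ball (E i p.1) (p.2.+1%:R^-1))° `<=` U i.
  move=> i; have /nbhs_ballP [e e0 eU] := nU i.
  have [k _ hk] : exists2 k : nat, True & k.+1%:R^-1 < e / 2.
    have e20 : 0 < e / 2 by rewrite divr_gt0.
    have := near_infty_natSinv_lt (PosNum e20).
    by case=> N _ hN; exists N => //; apply: hN => /=.
  set r := (k.+1%:R^-1 : R).
  have r0 : 0 < r by rewrite invr_gt0.
  have r20 : 0 < r / 2 by rewrite divr_gt0.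
  have [m hm] := EP (x i) r20.
  exists (m, k) => /=; split.
    apply/nbhs_ballP; exists (r / 2) => // z xz.
    rewrite -/r (splitr r); apply: ball_triangle xz.
    exact: ball_sym.
  move=> z /interior_subset cz; apply: eU.
  apply: (@le_ball _ _ _ (r / 2 + r)).
    move: hk r0; rewrite -/r => hk r0; lra.
  exact: ball_triangle hm cz.
move=> hex; have [f hf] := choice hex.
pose u := [ffun i => f i].
have xb : box u x by move=> i; rewrite ffunE; case: (hf i).
have bO : box u `<=` O.
  move=> y /= hy; apply: UO => i.
  by case: (hf i) => _; apply; have := hy i; rewrite ffunE.
exists u => //; by destruct (pselect (box u `<=` O)).
Qed.

Definition Grect : set (set P) :=
  [set S | exists A : forall i, set (Y i),
     (forall i, measurable (A i : set (borel (Y i)))) /\ rect A = S].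

Lemma borelE : @measurable _ (borel P) = <<s Grect >>.
Proof.
apply/seteqP; split; last first.
  apply: smallest_sub; first exact: (sigma_algebra_measurable (borel P)).
  by move=> _ [A [mA <-]]; exact: rect_meas.
apply: smallest_sub; first exact: smallest_sigma_algebra.
move=> O oO; rewrite (open_union oO).
apply: (@countable_bigcupT_measurable _ (g_sigma_algebraType Grect)).
  exact: countableP.
move=> u; destruct (pselect (box u `<=` O)); last exact: (@measurable0 _ (g_sigma_algebraType Grect)).
apply: sub_sigma_algebra.
exists (fun i => (ball (E i (u i).1) ((u i).2.+1%:R^-1))°); split => //.
move=> i; apply: sub_sigma_algebra; exact: open_interior.
Qed.


Lemma rect_unique (m1 m2 : {measure set (borel P) -> \bar R}) :
  (m1 setT < +oo)%E ->
  (forall A : forall i, set (Y i), (forall i, measurable (A i : set (borel (Y i)))) ->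
     m1 (rect A) = m2 (rect A)) ->
  forall B : set (borel P), measurable B -> m1 B = m2 B.
Proof.
move=> fin h B mB.
have := @measure_unique _ R (borel P) Grect (fun=> setT) borelE. move=> H; apply: H => //.
- move=> _ _ [A [mA <-]] [A' [mA' <-]]; exists (fun i => A i `&` A' i); split.
    by move=> i; apply: measurableI.
  apply/seteqP; split=> x /=.
    by move=> h'; split=> i; case: (h' i).
  by case=> h1 h2 i; split.
- move=> _; exists (fun i => setT); split => //; by apply/seteqP; split.
- by apply/seteqP; split => // x _; exists 0%N.
- by move=> _ [A [mA <-]]; apply: h.
Qed.

End Prod.

Definition pushM d d' (T1 : measurableType d) (T2 : measurableType d') (R : realType)
  (m : {measure set T1 -> \bar R}) (f : T1 -> T2) (mf : measurable_fun setT f) :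
  {measure set T2 -> \bar R} :=
  @measure_function_pushforward__canonical__measure_function_Measure _ _ _ _ _ m f mf.

Lemma pushME d d' (T1 : measurableType d) (T2 : measurableType d') (R : realType)
  (m : {measure set T1 -> \bar R}) (f : T1 -> T2) (mf : measurable_fun setT f) A :
  pushM m mf A = m (f @^-1` A).
Proof. by []. Qed.

Section Main.
Variables (R : realType) (n : nat) (X : 'I_n -> completePseudoMetricType R).
Hypothesis HX : forall i, polish_space (X i).
Variable mu : forall i, probability (borel (X i)) R.
Variable muX : {measure set (borel (forall i, X i)) -> \bar R}.
Hypothesis HmuX : is_product_measure muX (fun i => mu i).
Variable c : borel (forall i, X i) -> R.
Hypothesis c_meas : measurable_fun [set: borel (forall i, X i)] c.
Hypothesis c_int : muX.-integrable [set: borel (forall i, X i)] (EFin \o c).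

Local Notation P := (forall i, X i).
Local Notation T := (borel P).

Let sepX i : exists S : set (X i), countable S /\ dense S := (HX i).2.

Let muX_setT : muX setT = 1%E.
Proof.
have := HmuX (fun i => measurableT).
rewrite (_ : [set x | forall i, setT (x i)] = setT); last by apply/seteqP.
move=> ->; rewrite big1 // => i _; exact: probability_setT.
Qed.

Definition muP : set T -> \bar R := fun A => muX A.
HB.instance Definition _ := Measure.copy muP muX.
HB.instance Definition _ := Measure_isProbability.Build _ _ _ muP muX_setT.

Definition mixf (al : {set 'I_n}) (p : P * P) : P :=
  fun i => if i \in al then p.1 i else p.2 i.

Definition mixT al : (T * T)%type -> T := mixf al.

Lemma mix_meas al : measurable_fun setT (mixT al).
Proof.
have hb := borelE sepX.
apply: (@measurability _ _ (T * T)%type T setT (mixT al) (Grect (Y:=X)) hb) => /=.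
move=> _ [_ [A [mA <-]] <-].
have -> : setT `&` mixT al @^-1` rect A =
    rect (fun i => if i \in al then A i else setT) `*`
    rect (fun i => if i \in al then setT else A i).
  apply/seteqP; split => [[x y]|[x y]] /=.
    move=> [_ h]; split => i; have := h i; rewrite /mixT /mixf /=; by case: (i \in al).
  move=> [h1 h2]; split => // i; have := h1 i; have := h2 i; rewrite /mixT /mixf /=.
  by case: (i \in al).
apply: measurableX; apply: rect_meas => i; case: (i \in al) => //.
Qed.


Lemma push_mix al (A : set T) : measurable A ->
  pushforward (muP \x muP)%E (mixT al) A = muP A.
Proof.
move=> mA.
have := @rect_unique R _ _ sepX (pushM (muP \x muP)%E (mix_meas al)) muP.
move=> H; apply: H => //.
- rewrite pushME preimage_setT; apply: le_lt_trans (ltry 1).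
  by rewrite le_eqVlt; apply/orP; left; apply/eqP; exact: probability_setT.
move=> B mB.
rewrite pushME.
have -> : mixT al @^-1` rect B =
    rect (fun i => if i \in al then B i else setT) `*`
    rect (fun i => if i \in al then setT else B i).
  apply/seteqP; split => [[x y]|[x y]] /=.
    move=> h; split => i; have := h i; rewrite /mixT /mixf /=; by case: (i \in al).
  move=> [h1 h2] i; have := h1 i; have := h2 i; rewrite /mixT /mixf /=.
  by case: (i \in al).
have m1 : measurable (rect (fun i => if i \in al then B i else setT) : set T).
  by apply: rect_meas => i; case: (i \in al).
have m2 : measurable (rect (fun i => if i \in al then setT else B i) : set T).
  by apply: rect_meas => i; case: (i \in al).
apply: (etrans (product_measure1E muP muP m1 m2)).
have e1 : muP (rect (fun i => if i \in al then B i else setT)) =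
    (\prod_i mu i (if i \in al then B i else setT))%E.
  by apply: HmuX => i; case: (i \in al).
have e2 : muP (rect (fun i => if i \in al then setT else B i)) =
    (\prod_i mu i (if i \in al then setT else B i))%E.
  by apply: HmuX => i; case: (i \in al).
have e3 : muP (rect B) = (\prod_i mu i (B i))%E by apply: HmuX.
transitivity (muP (rect (fun i => if i \in al then B i else setT)) *
   muP (rect (fun i => if i \in al then setT else B i)))%E; first by [].
transitivity (muP (rect B)); last by [].
rewrite e1 e2 e3.
rewrite -big_split /=; apply: eq_bigr => i _.
by case: (i \in al); rewrite probability_setT ?mule1 ?mul1e.
Qed.


Definition gfun al (p : (T * T)%type) : \bar R := (`|c (mixT al p)|)%:E.

Lemma gfun_meas al : measurable_fun (setT : set (T * T)%type) (gfun al).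
Proof.
apply/measurable_EFinP; apply: measurableT_comp; first exact: normr_measurable.
exact: measurableT_comp c_meas (mix_meas al).
Qed.

Lemma gfun_ge0 al p : (0 <= gfun al p)%E.
Proof. by rewrite lee_fin normr_ge0. Qed.

Definition Ff al (y : T) : \bar R := (\int[muP]_x gfun al (x, y))%E.

Lemma Ff_meas al : measurable_fun setT (Ff al).
Proof. have := measurable_fun_fubini_tonelli_G (m1 := muP) (gfun al) (gfun_meas al) (@gfun_ge0 al).
by []. Qed.

Lemma Ff_ge0 al y : (0 <= Ff al y)%E.
Proof. by apply: integral_ge0 => x _; exact: gfun_ge0. Qed.

Lemma Ff_int al : (\int[muP]_y Ff al y = \int[muP]_x (`|c x|)%:E)%E.
Proof.
have := fubini_tonelli2 (m1 := muP) (m2 := muP) (gfun al) (gfun_meas al) (@gfun_ge0 al).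
rewrite /Ff => <-.
have mf : measurable_fun (setT : set T) (fun x => (`|c x|)%:E).
  by apply/measurable_EFinP; apply: measurableT_comp => //; exact: normr_measurable.
have f0 : {in setT, forall x : T, (0 <= (`|c x|)%:E)%E} by move=> x _; rewrite lee_fin normr_ge0.
have := ge0_integral_pushforward (mix_meas al) (muP \x muP)%E measurableT mf f0.
rewrite preimage_setT => h.
transitivity (\int[pushM (muP \x muP)%E (mix_meas al)]_x (`|c x|)%:E)%E; last first.
  apply: eq_measure_integral => A mA _; rewrite pushME; exact: push_mix.
exact: (esym h).
Qed.


Local Notation Q al := (forall i : {i : 'I_n | i \in al}, X (sval i)).

Let sepQ (al : {set 'I_n}) (j : {i : 'I_n | i \in al}) :
  exists S : set (X (sval j)), countable S /\ dense S := sepX (sval j).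

Definition rf (al : {set 'I_n}) (x : P) : Q al := fun j => x (sval j).
Arguments rf : clear implicits.
Definition rfT (al : {set 'I_n}) : T -> borel (Q al) := rf al.
Arguments rfT : clear implicits.

Lemma rf_pre (al : {set 'I_n}) (A : forall j : {i : 'I_n | i \in al}, set (X (sval j))) :
  rf al @^-1` rect A = rect (fun i => [set z : X i | forall h : i \in al, A (exist _ i h) z]).
Proof.
apply/seteqP; split => x /=.
  by move=> h i hi; exact: (h (exist _ i hi)).
by move=> h -[i hi]; exact: h.
Qed.

Lemma rfA_meas (al : {set 'I_n}) (A : forall j : {i : 'I_n | i \in al}, set (X (sval j))) :
  (forall j, measurable (A j : set (borel (X (sval j))))) ->
  forall i, measurable ([set z : X i | forall h : i \in al, A (exist _ i h) z] : set (borel (X i))).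
Proof.
move=> mA i; case: (pselect (i \in al)) => hi.
  rewrite (_ : [set z | _] = A (exist _ i hi)); first exact: (mA (exist _ i hi)).
  apply/seteqP; split => z /=; first by apply.
  by move=> Az h; have e : h = hi := bool_irrelevance h hi; subst h.
rewrite (_ : [set z | _] = setT) //.
by apply/seteqP; split => z // _ h; rewrite h in hi.
Qed.

Lemma rf_meas (al : {set 'I_n}) : measurable_fun setT (rfT al).
Proof.
have hb := borelE (@sepQ al).
apply: (@measurability _ _ T (borel (Q al)) setT (rfT al) _ hb) => /=.
move=> _ [_ [A [mA <-]] <-].
rewrite setTI /rfT rf_pre; apply: rect_meas; exact: rfA_meas.
Qed.


Lemma prod_reindex (al : {set 'I_n}) (A : forall j : {i : 'I_n | i \in al}, set (X (sval j))) :
  (\prod_(i : 'I_n) mu i [set z : X i | forall h : i \in al, A (exist _ i h) z] =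
   \prod_(j : {i : 'I_n | i \in al}) mu (sval j) (A j))%E.
Proof.
rewrite (bigID (fun i => i \in al)) /=.
rewrite [X in (_ * X)%E]big1 ?mule1; last first.
  move=> i hi; rewrite (_ : [set z | _] = setT); first exact: probability_setT.
  by apply/seteqP; split => z // _ h; rewrite h in hi.
rewrite big_sub; apply: eq_bigr => -[i hi] _ /=.
congr (mu i _); apply/seteqP; split => z /=; first by apply.
by move=> Az h; have e : h = hi := bool_irrelevance h hi; subst h.
Qed.

Lemma nu_eq (al : {set 'I_n}) (nu : {measure set (borel (Q al)) -> \bar R}) :
  is_product_measure nu (fun i => mu (sval i)) ->
  forall B, measurable B -> nu B = pushM muP (@rf_meas al) B.
Proof.
move=> Hnu B mB.
have := @rect_unique R _ _ (@sepQ al) nu (pushM muP (@rf_meas al)).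
move=> H; apply: H => //.
- have e : nu (rect (fun j : {i : 'I_n | i \in al} => setT)) = 1%E.
    rewrite (Hnu (fun j => setT)) //; rewrite big1 // => j _; exact: probability_setT.
  rewrite (_ : setT = rect (fun j : {i : 'I_n | i \in al} => setT)) ?e ?ltry //.
  by apply/seteqP; split.
move=> A mA.
transitivity (\prod_(j : {i : 'I_n | i \in al}) mu (sval j) (A j))%E.
  exact: Hnu.
rewrite pushME /rfT rf_pre -prod_reindex.
transitivity (muP (rect (fun i => [set z : X i | forall h : i \in al, A (exist _ i h) z]))); last by [].
by apply/esym/HmuX; exact: rfA_meas.
Qed.


Lemma glue_in (al : {set 'I_n}) (x : Q al) (y : P) i (h : i \in al) :
  glue_pt x y i = x (exist _ i h).
Proof.
rewrite /glue_pt.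
suff H : forall b (e : (i \in al) = b),
  (if b as b' return ((i \in al) = b' -> X i)
   then (fun h0 => x (exist _ i h0)) else (fun _ => y i)) e = x (exist _ i h).
  exact: H.
case=> e /=; first by have e' : e = h := bool_irrelevance e h; subst e.
by exfalso; rewrite e in h.
Qed.

Lemma glue_out (al : {set 'I_n}) (x : Q al) (y : P) i : i \notin al ->
  glue_pt x y i = y i.
Proof.
move=> hi; rewrite /glue_pt.
suff H : forall b (e : (i \in al) = b),
  (if b as b' return ((i \in al) = b' -> X i)
   then (fun h0 => x (exist _ i h0)) else (fun _ => y i)) e = y i.
  exact: H.
case=> e //=; by exfalso; rewrite e in hi.
Qed.

Lemma glue_rf (al : {set 'I_n}) (x y : P) : glue_pt (rf al x) y = mixf al (x, y).
Proof.
apply: functional_extensionality_dep => i; rewrite /mixf /=.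
case: (pselect (i \in al)) => hi.
  by rewrite (glue_in _ _ hi) hi.
by rewrite glue_out ?(negbTE (introN idP hi)) //; apply/negP.
Qed.

Definition glueT (al : {set 'I_n}) (y : P) : borel (Q al) -> T := fun x => glue_pt x y.
Arguments glueT : clear implicits.

Lemma glue_meas (al : {set 'I_n}) (y : P) : measurable_fun setT (glueT al y).
Proof.
have hb := borelE sepX.
apply: (@measurability _ _ (borel (Q al)) T setT (glueT al y) _ hb) => /=.
move=> _ [_ [A [mA <-]] <-].
have -> : setT `&` glueT al y @^-1` rect A =
    rect (fun j : {i : 'I_n | i \in al} => A (sval j)) `&`
    [set _ | forall i, i \notin al -> A i (y i)].
  apply/seteqP; split => x /=.
    move=> [_ h]; split.
      by move=> [i hi] /=; have := h i; rewrite /glueT (glue_in _ _ hi).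
    by move=> i hi; have := h i; rewrite /glueT glue_out.
  move=> [h1 h2]; split => // i; rewrite /glueT.
  case: (pselect (i \in al)) => hi.
    by rewrite (glue_in _ _ hi); exact: (h1 (exist _ i hi)).
  have hi' : i \notin al by apply/negP.
  by rewrite glue_out //; exact: h2.
apply: measurableI.
  by apply: rect_meas => j; exact: mA.
case: (pselect (forall i, i \notin al -> A i (y i))) => p.
  by rewrite (_ : [set _ | _] = setT) //; apply/seteqP; split.
by rewrite (_ : [set _ | _] = set0) //; apply/seteqP; split.
Qed.

Lemma nu_int (al : {set 'I_n}) (nu : {measure set (borel (Q al)) -> \bar R}) :
  is_product_measure nu (fun i => mu (sval i)) ->
  forall y : P, (\int[nu]_x (`|c (glue_pt x y)|)%:E = Ff al y)%E.
Proof.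
move=> Hnu y.
transitivity (\int[pushM muP (@rf_meas al)]_x (`|c (glue_pt x y)|)%:E)%E.
  by apply: eq_measure_integral => A mA _; exact: nu_eq.
have mh : measurable_fun (setT : set (borel (Q al))) (fun x => (`|c (glueT al y x)|)%:E).
  apply/measurable_EFinP; apply: measurableT_comp; first exact: normr_measurable.
  exact: measurableT_comp c_meas (@glue_meas al y).
have h0 : {in setT, forall x : borel (Q al), (0 <= (`|c (glueT al y x)|)%:E)%E}.
  by move=> x _; rewrite lee_fin normr_ge0.
have := ge0_integral_pushforward (@rf_meas al) muP measurableT mh h0.
rewrite preimage_setT => ->.
by apply: eq_integral => x _ /=; rewrite /glueT /rfT glue_rf.
Qed.


Definition Hf (y : T) : \bar R := (\sum_(al : {set 'I_n}) Ff al y)%E.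
Let C := (\int[muP]_x (`|c x|)%:E)%E.

Lemma C_ge0 : (0 <= C)%E.
Proof. by apply: integral_ge0 => x _; rewrite lee_fin normr_ge0. Qed.

Lemma C_fin : (C < +oo)%E.
Proof.
have /integrableP [_ h] := c_int.
rewrite /C; apply: le_lt_trans h; rewrite le_eqVlt; apply/orP; left; apply/eqP.
by apply: eq_integral => x _ /=.
Qed.

Lemma Hf_meas : measurable_fun setT Hf.
Proof. by apply: emeasurable_sum => al; exact: Ff_meas. Qed.

Lemma Hf_ge0 y : (0 <= Hf y)%E.
Proof. by apply: sume_ge0 => al _; exact: Ff_ge0. Qed.

Lemma Ff_le_Hf al y : (Ff al y <= Hf y)%E.
Proof.
rewrite /Hf (bigD1 al) //= leeDl //.
by apply: sume_ge0 => al' _; exact: Ff_ge0.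
Qed.

Lemma Hf_int : (\int[muP]_y Hf y = C *+ 2 ^ n)%E.
Proof.
rewrite /Hf ge0_integral_sum //; last 2 first.
  by move=> al; exact: Ff_meas.
  by move=> al y _; exact: Ff_ge0.
under eq_bigr do rewrite Ff_int.
rewrite sumr_const -cardsT -powersetT card_powerset cardsT card_ord.
by [].
Qed.


Lemma select : exists y, (Hf y <= ((2 ^+ n.+1)%:R)%:E * C)%E.
Proof.
apply: contrapT => hne.
have hlt : forall y, (((2 ^+ n.+1)%:R)%:E * C < Hf y)%E.
  by move=> y; rewrite ltNge; apply/negP => h; apply: hne; exists y.
have [C0|Cpos] : C = 0%E \/ (0 < C)%E.
  by rewrite lt_neqAle C_ge0 andbT; case: eqP => [->|]; [left|right].
- have hpos : forall y, (0 < Hf y)%E by move=> y; have := hlt y; rewrite C0 mule0.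
  have hi : (\int[muP]_y `|Hf y| = 0)%E.
    transitivity (\int[muP]_y Hf y)%E.
      by apply: eq_integral => y _; rewrite gee0_abs // Hf_ge0.
    rewrite Hf_int C0; apply: mul0rn.
  have := (ae_eq_integral_abs muP measurableT Hf_meas).1 hi.
  case=> N [mN N0 hN].
  have : muP setT = 0%E.
    apply: (subset_measure0 _ _ _ N0) => //.
    by move=> y _; apply: hN => /= h; have := hpos y; rewrite h // lt_def eqxx.
  move=> hT; have h1 : muP setT = 1%E := muX_setT.
  have h10 : (1%E : \bar R) = 0%E := etrans (esym h1) hT.
  by case: h10 => /eqP; rewrite oner_eq0.
- have Cfin : C \is a fin_num by rewrite ge0_fin_numE ?C_ge0 ?C_fin.
  set r := fine C.
  have Cr : C = r%:E by rewrite /r fineK.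
  have r0 : (0 < r)%R by rewrite -lte_fin -Cr.
  set a := ((2 ^+ n.+1)%:R * r)%R.
  have a0 : (0 < a)%R by rewrite /a mulr_gt0 // ltr0n expn_gt0.
  have := le_integral_abse muP measurableT Hf_meas a0.
  rewrite (_ : setT `&` _ = setT); last first.
    apply/seteqP; split => // y _; split => //=.
    rewrite gee0_abs ?Hf_ge0 //; apply: ltW; have := hlt y.
    by rewrite Cr /a EFinM.
  move=> hm.
  have hm' : (a%:E * muP setT <= \int[muP]_x `|Hf x|)%E := hm.
  have e1 : muP setT = 1%E := muX_setT.
  rewrite e1 mule1 in hm'.
  move: hm'.
  rewrite (_ : (\int[muP]_x `|Hf x|)%E = (\int[muP]_y Hf y)%E); last first.
    by apply: eq_integral => y _; rewrite gee0_abs // Hf_ge0.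
  rewrite Hf_int Cr -EFin_natmul lee_fin /a.
  rewrite natrXE expnS natrM -mulr_natr => h.
  have N0 : (0 < (2 ^ n)%:R :> R)%R by rewrite ltr0n expn_gt0.
  have := mulr_gt0 N0 r0; move: h; set N := ((2 ^ n)%:R : R); nra.
Qed.


Lemma main_sec : exists y : P,
    forall (alpha : {set 'I_n})
      (nu : {measure set (borel (forall i : {i : 'I_n | i \in alpha}, X (sval i)))
               -> \bar R}),
      is_product_measure nu (fun i => mu (sval i)) ->
      nu.-integrable [set: borel (forall i : {i : 'I_n | i \in alpha}, X (sval i))]
        (fun x => (c (glue_pt x y))%:E) /\
      (\int[nu]_x `|c (glue_pt x y)|%:E
         <= ((2 ^+ n.+1)%:R)%:E * \int[muX]_x `|c x|%:E)%E.
Proof.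
have [y hy] := select.
exists y => al nu Hnu.
have hF := nu_int Hnu y.
have hle : (Ff al y <= ((2 ^+ n.+1)%:R)%:E * C)%E := le_trans (Ff_le_Hf al y) hy.
split; last by rewrite hF.
apply/integrableP; split.
  by apply/measurable_EFinP; exact: measurableT_comp c_meas (@glue_meas al y).
rewrite (_ : (\int[nu]_x `|(c (glue_pt x y))%:E|)%E = (\int[nu]_x `|c (glue_pt x y)|%:E)%E); last first.
  by apply: eq_integral.
rewrite hF; apply: le_lt_trans hle _.
have Cfin : C \is a fin_num by rewrite ge0_fin_numE ?C_ge0 ?C_fin.
by rewrite -(fineK Cfin) -EFinM ltry.
Qed.

End Main.

Unset Implicit Arguments.
Set Strict Implicit.

Theorem mainTheorem9 (R : realType) (n : nat)
  (X : 'I_n -> completePseudoMetricType R)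
  (HX : forall i, polish_space (X i))
  (mu : forall i, probability (borel (X i)) R)
  (muX : {measure set (borel (forall i, X i)) -> \bar R})
  (HmuX : is_product_measure muX (fun i => mu i))
  (c : borel (forall i, X i) -> R)
  (c_meas : measurable_fun [set: borel (forall i, X i)] c)
  (c_int : muX.-integrable [set: borel (forall i, X i)] (EFin \o c)) :
  exists y : forall i, X i,
    forall (alpha : {set 'I_n})
      (nu : {measure set (borel (forall i : {i : 'I_n | i \in alpha}, X (sval i)))
               -> \bar R}),
      is_product_measure nu (fun i => mu (sval i)) ->
      nu.-integrable [set: borel (forall i : {i : 'I_n | i \in alpha}, X (sval i))]
        (fun x => (c (glue_pt x y))%:E) /\
      (\int[nu]_x `|c (glue_pt x y)|%:E
         <= ((2 ^+ n.+1)%:R)%:E * \int[muX]_x `|c x|%:E)%E.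
Proof. exact: (@main_sec R n X HX mu muX HmuX c c_meas c_int). Qed.
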